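(* The set $\mathcal{L}_6$ of real chords of $\mathcal{C}$ (lines joining two distinct points of $\mathcal{C}$) is a single $G$-orbit, and every $\ell\in\mathcal{L}_6$ satisfies $OD_2(\ell)=[0,2,q-1,0,0]$ and $OD_0(\ell)=[2,0,0,q-1,0]$ if $q\equiv 5\pmod 6$, and $OD_0(\ell)=[2,0,\tfrac{q-1}{3},0,\tfrac{2(q-1)}{3}]$ if $q\equiv 1\pmod 6$.
   Context: Let $q$ be a power of a prime $p\neq 2,3$. In $\mathrm{PG}(3,q)$ with coordinates $(Y_0,\dots,Y_3)$, the twisted cubic is $\mathcal{C}=\{P(t)=(1,t,t^2,t^3):t\in\mathbb{F}_q\}\cup\{P(\infty)=(0,0,0,1)\}$. $G\le \mathrm{PGL}(4,q)$ is the image of $\mathrm{PGL}(2,q)$ under the map sending the matrix $\begin{pmatrix}a&b\\c&d\end{pmatrix}$ to $\begin{pmatrix} a^3&a^2b&ab^2&b^3\\ 3a^2c&a^2d+2abc&b^2c+2abd&3b^2d\\ 3ac^2&bc^2+2acd&ad^2+2bcd&3bd^2\\ c^3&c^2d&cd^2&d^3\end{pmatrix}$. Osculating planes: $\Pi(t):-t^3Y_0+3t^2Y_1-3tY_2+Y_3=0$ ($t\in\mathbb{F}_q$), $\Pi(\infty):Y_0=0$. Tangent line at $P\in\mathcal{C}$: the line through $P$ meeting $\mathcal{C}$ with multiplicity two at $P$. Point classes: $\mathcal{P}_1$ = points of $\mathcal{C}$; $\mathcal{P}_2$ = points not on $\mathcal{C}$ on a tangent line; $\mathcal{P}_3$ =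 points not on $\mathcal{C}$ on exactly three osculating planes; $\mathcal{P}_4$ = points not on $\mathcal{C}$ on exactly one osculating plane; $\mathcal{P}_5$ = points on no osculating plane. Plane classes: $\mathcal{H}_1$ = osculating planes; $\mathcal{H}_2$ = planes meeting $\mathcal{C}$ in exactly two points; $\mathcal{H}_3$ = exactly three points; $\mathcal{H}_4$ = non-osculating planes meeting $\mathcal{C}$ in exactly one point; $\mathcal{H}_5$ = planes disjoint from $\mathcal{C}$. $OD_0(\ell)$ (resp. $OD_2(\ell)$) is the list of the numbers of points of $\ell$ in $\mathcal{P}_1,\dots,\mathcal{P}_5$ (resp. planes through $\ell$ in $\mathcal{H}_1,\dots,\mathcal{H}_5$). *)

(* Defs.v *)
(* Projective space PG(3,F) over a finite field F is modelled
   with mxalgebra: every projective subspace is represented by its canonical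
   row-space matrix <<A>>%MS : 'M[F]_4 (rank 1 = point, 2 = line, 3 = plane). *)
From HB Require Import structures.
From mathcomp Require Import all_boot all_order all_algebra.
Set Implicit Arguments. Unset Strict Implicit. Unset Printing Implicit Defensive.
Import Order.TTheory GRing.Theory Num.Theory.
Local Open Scope ring_scope.

Section PG3.
Variable F : finFieldType.

Definition rv4 (a b c d : F) : 'rV[F]_4 := \row_(i < 4) [:: a; b; c; d]`_i.
Definition cv4 (a b c d : F) : 'cV[F]_4 := \col_(i < 4) [:: a; b; c; d]`_i.

Definition is_psub (k : nat) (U : 'M[F]_4) : bool :=
  (\rank U == k) && (<<U>>%MS == U).
Definition is_point := is_psub 1.
Definition is_line := is_psub 2.
Definition is_plane := is_psub 3.

Definition pt_of (v : 'rV[F]_4) : 'M[F]_4 := <<v>>%MS.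
Definition join (U V : 'M[F]_4) : 'M[F]_4 := <<(U + V)%MS>>%MS.
Definition plane_of (u : 'cV[F]_4) : 'M[F]_4 := <<kermx u>>%MS.

(* the twisted cubic, parametrised by PG(1,q) = option F (None = infinity) *)
Definition cpt (t : option F) : 'M[F]_4 :=
  match t with
  | Some t => pt_of (rv4 1 t (t ^+ 2) (t ^+ 3))
  | None => pt_of (rv4 0 0 0 1)
  end.
Definition on_curve (P : 'M[F]_4) : bool := [exists t, P == cpt t].

Definition osc (t : option F) : 'M[F]_4 :=
  match t with
  | Some t => plane_of (cv4 (- t ^+ 3) (3%:R * t ^+ 2) (- (3%:R * t)) 1)
  | None => plane_of (cv4 1 0 0 0)
  end.
Definition is_osc (H : 'M[F]_4) : bool := [exists t, H == osc t].

(* tangent lines: span of P(t) and the derivative point P'(t) *)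
Definition tangent (t : option F) : 'M[F]_4 :=
  match t with
  | Some t => join (pt_of (rv4 1 t (t ^+ 2) (t ^+ 3)))
                   (pt_of (rv4 0 1 (2%:R * t) (3%:R * t ^+ 2)))
  | None => join (pt_of (rv4 0 0 0 1)) (pt_of (rv4 0 0 1 0))
  end.

Definition n_osc (P : 'M[F]_4) : nat := #|[set t : option F | (P <= osc t)%MS]|.
Definition n_cpts (H : 'M[F]_4) : nat := #|[set t : option F | (cpt t <= H)%MS]|.

Definition P1 (P : 'M[F]_4) := is_point P && on_curve P.
Definition P2 (P : 'M[F]_4) :=
  [&& is_point P, ~~ on_curve P & [exists t, (P <= tangent t)%MS]].
Definition P3 (P : 'M[F]_4) := [&& is_point P, ~~ on_curve P & n_osc P == 3].
Definition P4 (P : 'M[F]_4) := [&& is_point P, ~~ on_curve P & n_osc P == 1].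
Definition P5 (P : 'M[F]_4) := is_point P && (n_osc P == 0).

Definition H1 (H : 'M[F]_4) := is_plane H && is_osc H.
Definition H2 (H : 'M[F]_4) := is_plane H && (n_cpts H == 2).
Definition H3 (H : 'M[F]_4) := is_plane H && (n_cpts H == 3).
Definition H4 (H : 'M[F]_4) := [&& is_plane H, ~~ is_osc H & n_cpts H == 1].
Definition H5 (H : 'M[F]_4) := is_plane H && (n_cpts H == 0).

Definition pts_in (C : pred 'M[F]_4) (l : 'M[F]_4) : nat :=
  #|[set P | C P & (P <= l)%MS]|.
Definition planes_in (C : pred 'M[F]_4) (l : 'M[F]_4) : nat :=
  #|[set H | C H & (l <= H)%MS]|.
Definition OD0 (l : 'M[F]_4) : seq nat :=
  [:: pts_in P1 l; pts_in P2 l; pts_in P3 l; pts_in P4 l; pts_in P5 l].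
Definition OD2 (l : 'M[F]_4) : seq nat :=
  [:: planes_in H1 l; planes_in H2 l; planes_in H3 l; planes_in H4 l;
      planes_in H5 l].

Definition is_chord (l : 'M[F]_4) : Prop :=
  exists s t : option F, s <> t /\ l = join (cpt s) (cpt t).

(* the group G: image of PGL(2,q); it acts on row vectors on the right *)
Definition Gmx (a b c d : F) : 'M[F]_4 :=
  \matrix_(i < 4, j < 4)
   nth 0 (nth [::] [:: [:: a ^+ 3; a ^+ 2 * b; a * b ^+ 2; b ^+ 3];
       [:: 3%:R * a ^+ 2 * c; a ^+ 2 * d + 2%:R * a * b * c;
           b ^+ 2 * c + 2%:R * a * b * d; 3%:R * b ^+ 2 * d];
       [:: 3%:R * a * c ^+ 2; b * c ^+ 2 + 2%:R * a * c * d;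
           a * d ^+ 2 + 2%:R * b * c * d; 3%:R * b * d ^+ 2];
       [:: c ^+ 3; c ^+ 2 * d; c * d ^+ 2; d ^+ 3]] i) j.
Definition gact (M U : 'M[F]_4) : 'M[F]_4 := <<(U *m M)>>%MS.
Definition in_G_image (l l' : 'M[F]_4) : Prop :=
  exists a b c d : F, a * d - b * c != 0 /\ l' = gact (Gmx a b c d) l.

End PG3.

(* Main.v *)
Require Import Defs.
From HB Require Import structures.
From mathcomp Require Import all_boot all_order all_algebra.
From mathcomp Require Import all_fingroup all_solvable all_field ring zify.
Import Defs.
Set Implicit Arguments. Unset Strict Implicit. Unset Printing Implicit Defensive.
Import Order.TTheory GRing.Theory Num.Theory.
Local Open Scope ring_scope.

Section W.
Variable F : finFieldType.
Implicit Types (a b c d k : F).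

Ltac ord4 j := case: j => [[|[|[|[|//]]]] ?].

Lemma rv4E (v : 'rV[F]_4) : v = rv4 (v 0 0) (v 0 1) (v 0 2) (v 0 3).
Proof.
apply/rowP => j; rewrite mxE; ord4 j => /=; congr (v _ _); exact: val_inj.
Qed.

Lemma rv4_eq a b c d a' b' c' d' :
  (rv4 a b c d == rv4 a' b' c' d') = [&& a == a', b == b', c == c' & d == d'].
Proof.
apply/eqP/idP => [E|/and4P[/eqP-> /eqP-> /eqP-> /eqP->] //].
have e := fun j => congr1 (fun M : 'rV[F]_4 => M 0 j) E.
move: (e 0) (e 1) (e 2) (e 3); rewrite !mxE /= => -> -> -> ->.
by rewrite !eqxx.
Qed.

Lemma rv4_eq0 a b c d : (rv4 a b c d == 0) = [&& a == 0, b == 0, c == 0 & d == 0].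
Proof.
have -> : (0 : 'rV[F]_4) = rv4 0 0 0 0 by apply/rowP => j; rewrite !mxE; ord4 j.
exact: rv4_eq.
Qed.

Lemma rv4Z k a b c d : k *: rv4 a b c d = rv4 (k * a) (k * b) (k * c) (k * d).
Proof. by apply/rowP => j; rewrite !mxE; ord4 j. Qed.

Lemma rv4D a b c d a' b' c' d' :
  rv4 a b c d + rv4 a' b' c' d' = rv4 (a + a') (b + b') (c + c') (d + d').
Proof. by apply/rowP => j; rewrite !mxE; ord4 j. Qed.

Lemma rv4_cv4 a b c d x y z w :
  rv4 a b c d *m cv4 x y z w = (a * x + b * y + c * z + d * w)%:M.
Proof.
apply/rowP => j; rewrite !mxE !big_ord_recl big_ord0 !mxE /=.
rewrite (ord1 j) eqxx mulr1n; ring.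
Qed.

Lemma mx11_eq0 k : (k%:M == 0 :> 'M[F]_1) = (k == 0).
Proof.
apply/eqP/eqP => [E|->]; last by apply/matrixP => i j; rewrite !mxE mul0rn.
by move: (congr1 (fun M : 'M[F]_1 => M 0 0) E); rewrite !mxE eqxx mulr1n.
Qed.

Lemma cv4N a b c d : cv4 (- a) (- b) (- c) (- d) = - cv4 a b c d.
Proof. by apply/colP => j; rewrite !mxE; ord4 j. Qed.

Lemma cv4Z k a b c d : k *: cv4 a b c d = cv4 (k * a) (k * b) (k * c) (k * d).
Proof. by apply/colP => j; rewrite !mxE; ord4 j. Qed.


Definition hP (t : option F) : F * F := if t is Some t then (1, t) else (0, 1).
Definition nrm (x : F * F) : option F := if x.1 == 0 then None else Some (x.2 / x.1).
Definition nz (x : F * F) := x != (0, 0).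
Definition sc k (x : F * F) := (k * x.1, k * x.2).
Definition act a b c d (x : F * F) := (a * x.1 + c * x.2, b * x.1 + d * x.2).
Definition mob a b c d t := nrm (act a b c d (hP t)).

Lemma hP_nz t : nz (hP t).
Proof. by case: t => [t|]; rewrite /nz /= xpair_eqE ?oner_eq0 ?andbF. Qed.

Lemma nzP x : nz x -> (x.1 != 0) || (x.2 != 0).
Proof. by case: x => x1 x2; rewrite /nz xpair_eqE negb_and. Qed.

Lemma hP_nrm x : nz x -> exists2 k, k != 0 & hP (nrm x) = sc k x.
Proof.
move/nzP; case: x => x1 x2 /=; rewrite /nrm /sc /=.
have [-> /= x2n|x1n _] := eqVneq x1 0.
  by exists x2^-1; rewrite ?invr_eq0 // mulr0 mulVf.
by exists x1^-1; rewrite ?invr_eq0 // mulVf // mulrC.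
Qed.

Lemma nrm_sc k x : k != 0 -> nrm (sc k x) = nrm x.
Proof.
move=> kn; rewrite /nrm /sc /= mulf_eq0 (negbTE kn) /=.
case: eqP => // /eqP x1n; congr Some; field; exact/andP.
Qed.

Lemma nrm_hP t : nrm (hP t) = t.
Proof. by case: t => [t|]; rewrite /nrm /= ?eqxx // oner_eq0 divr1. Qed.

Lemma act_sc a b c d k x : act a b c d (sc k x) = sc k (act a b c d x).
Proof. by rewrite /act /sc /=; congr pair; ring. Qed.

Lemma sc_sc k k' x : sc k (sc k' x) = sc (k * k') x.
Proof. by rewrite /sc /= !mulrA. Qed.

Lemma act_adj a b c d x : act d (-b) (-c) a (act a b c d x) = sc (a * d - b * c) x.
Proof. by rewrite /act /sc /=; congr pair; ring. Qed.

Lemma act_nz a b c d x : a * d - b * c != 0 -> nz x -> nz (act a b c d x).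
Proof.
move=> dn; apply: contra => /eqP E.
move: (act_adj a b c d x); rewrite E /act /sc /= !mulr0 !addr0 => /esym /eqP.
rewrite xpair_eqE !mulf_eq0 (negbTE dn) /= => /andP[/eqP e1 /eqP e2].
by move: E e1 e2; case: x => x1 x2 /= _ -> ->.
Qed.

Lemma mobK a b c d : a * d - b * c != 0 -> cancel (mob a b c d) (mob d (-b) (-c) a).
Proof.
move=> dn t; rewrite /mob.
have [k kn ->] := hP_nrm (act_nz dn (hP_nz t)).
by rewrite act_sc act_adj sc_sc nrm_sc ?nrm_hP // mulf_neq0.
Qed.

Lemma mobKV a b c d : a * d - b * c != 0 -> cancel (mob d (-b) (-c) a) (mob a b c d).
Proof.
move=> dn t; have := @mobK d (-b) (-c) a; rewrite !opprK => -> //.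
by rewrite mulrN mulNr opprK [d * a]mulrC.
Qed.

Lemma mob_inj a b c d : a * d - b * c != 0 -> injective (mob a b c d).
Proof. by move=> dn; apply: can_inj (mobK dn). Qed.

Definition Pv (x : F * F) : 'rV[F]_4 := rv4 (x.1^+3) (x.1^+2 * x.2) (x.1 * x.2^+2) (x.2^+3).
Definition Uv (x : F * F) : 'cV[F]_4 :=
  cv4 (- x.2^+3) (3%:R * x.1 * x.2^+2) (- (3%:R * x.1^+2 * x.2)) (x.1^+3).
Definition D1 (x : F * F) : 'rV[F]_4 := rv4 (3%:R * x.1^+2) (2%:R * x.1 * x.2) (x.2^+2) 0.
Definition D2 (x : F * F) : 'rV[F]_4 := rv4 0 (x.1^+2) (2%:R * x.1 * x.2) (3%:R * x.2^+2).

Lemma PvM a b c d x : Pv x *m Gmx a b c d = Pv (act a b c d x).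
Proof.
apply/rowP => j; rewrite !mxE !big_ord_recl big_ord0 !mxE /=.
ord4 j => /=; ring.
Qed.

Lemma D1M a b c d x : D1 x *m Gmx a b c d = a *: D1 (act a b c d x) + b *: D2 (act a b c d x).
Proof.
apply/rowP => j; rewrite !mxE !big_ord_recl big_ord0 !mxE /=.
ord4 j => /=; ring.
Qed.

Lemma D2M a b c d x : D2 x *m Gmx a b c d = c *: D1 (act a b c d x) + d *: D2 (act a b c d x).
Proof.
apply/rowP => j; rewrite !mxE !big_ord_recl big_ord0 !mxE /=.
ord4 j => /=; ring.
Qed.

Lemma GmxU a b c d y : Gmx a b c d *m Uv y = Uv (act d (-b) (-c) a y).
Proof.
apply/colP => j; rewrite !mxE !big_ord_recl big_ord0 !mxE /=.
ord4 j => /=; ring.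
Qed.

Lemma GmxK a b c d : Gmx a b c d *m Gmx d (-b) (-c) a = ((a * d - b * c)^+3)%:M.
Proof.
apply/matrixP => i j; rewrite !mxE !big_ord_recl big_ord0 !mxE /=.
ord4 i; ord4 j => /=; ring.
Qed.

Lemma Pv_sc k x : Pv (sc k x) = k^+3 *: Pv x.
Proof. by rewrite rv4Z /Pv /sc /=; congr rv4; ring. Qed.
Lemma Uv_sc k x : Uv (sc k x) = k^+3 *: Uv x.
Proof. by rewrite cv4Z /Uv /sc /=; congr cv4; ring. Qed.
Lemma D1_sc k x : D1 (sc k x) = k^+2 *: D1 x.
Proof. by rewrite rv4Z /D1 /sc /=; congr rv4; ring. Qed.
Lemma D2_sc k x : D2 (sc k x) = k^+2 *: D2 x.
Proof. by rewrite rv4Z /D2 /sc /=; congr rv4; ring. Qed.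

Lemma Pv_Uv w x : Pv w *m Uv x = ((x.1 * w.2 - x.2 * w.1)^+3)%:M.
Proof. by rewrite rv4_cv4; congr (_ %:M); ring. Qed.

Lemma eP u s : ((hP u).1 * (hP s).2 - (hP u).2 * (hP s).1 == 0) = (u == s).
Proof.
case: u => [u|]; case: s => [s|] /=; rewrite ?mul1r ?mulr1 ?mul0r ?mulr0 ?subr0 ?sub0r
  ?oppr_eq0 ?oner_eq0 ?subr_eq0 //.
all: try by rewrite !eqxx.
by apply/eqP/eqP => [->|[->]].
Qed.

End W.

Section W2.
Variable F : finFieldType.
Implicit Types (a b c d k : F) (t s u : option F) (x y w : F * F).
Local Notation M4 := 'M[F]_4.

Lemma sub_ptl (v : 'rV[F]_4) m (X : 'M[F]_(m, 4)) : (pt_of v <= X)%MS = (v <= X)%MS.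
Proof. by rewrite /pt_of genmxE. Qed.
Lemma sub_ptr m (X : 'M[F]_(m, 4)) (v : 'rV[F]_4) : (X <= pt_of v)%MS = (X <= v)%MS.
Proof. by rewrite /pt_of genmxE. Qed.
Lemma sub_joinl (U V : M4) m (X : 'M[F]_(m, 4)) :
  (join U V <= X)%MS = (U <= X)%MS && (V <= X)%MS.
Proof. by rewrite /join genmxE addsmx_sub. Qed.
Lemma sub_joinr m (X : 'M[F]_(m, 4)) (U V : M4) : (X <= join U V)%MS = (X <= U + V)%MS.
Proof. by rewrite /join genmxE. Qed.
Lemma sub_plane m (X : 'M[F]_(m, 4)) (u : 'cV[F]_4) : (X <= plane_of u)%MS = (X *m u == 0).
Proof. by rewrite /plane_of genmxE sub_kermx. Qed.

Lemma join_subl (U V : M4) : (U <= join U V)%MS.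
Proof. by rewrite sub_joinr addsmxSl. Qed.
Lemma join_subr (U V : M4) : (V <= join U V)%MS.
Proof. by rewrite sub_joinr addsmxSr. Qed.

Lemma cptE t : cpt t = pt_of (Pv (hP t)).
Proof. by case: t => [t|] /=; congr (pt_of _); rewrite /Pv /=; congr rv4; ring. Qed.

Lemma Uv_osc t : Uv (hP t) = if t is Some t then cv4 (- t ^+ 3) (3%:R * t ^+ 2) (- (3%:R * t)) 1
                             else - cv4 1 0 0 0.
Proof.
case: t => [t|]; rewrite /Uv /=; first by congr cv4; ring.
by rewrite -cv4N; congr cv4; ring.
Qed.

Lemma subosc m (X : 'M[F]_(m, 4)) t : (X <= osc t)%MS = (X *m Uv (hP t) == 0).
Proof.
rewrite Uv_osc; case: t => [t|] /=; rewrite sub_plane //.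
by rewrite mulmxN oppr_eq0.
Qed.

Lemma gen_ext (A B : M4) : (forall X : M4, (X <= A)%MS = (X <= B)%MS) -> <<A>>%MS = <<B>>%MS.
Proof.
move=> E; apply/genmxP/andP; split; first by rewrite -E.
by rewrite E.
Qed.

Lemma pt_sc k (v : 'rV[F]_4) : k != 0 -> pt_of (k *: v) = pt_of v.
Proof. by move=> kn; apply/genmxP/eqmxP; apply: eqmx_scale. Qed.

Lemma plane_sc k (u : 'cV[F]_4) : k != 0 -> plane_of (k *: u) = plane_of u.
Proof.
move=> kn; apply: gen_ext => X; rewrite !sub_kermx -scalemxAr scalemx_eq0.
by rewrite (negbTE kn).
Qed.

Lemma ptP (v w : 'rV[F]_4) : pt_of v = pt_of w -> exists a, v = a *: w.
Proof.
move=> E; have : (v <= w)%MS by rewrite -sub_ptr -E sub_ptr submx_refl.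
by case/sub_rVP=> a ->; exists a.
Qed.

Lemma cpt_nrm x : nz x -> cpt (nrm x) = pt_of (Pv x).
Proof.
move=> xn; have [k kn hPk] := hP_nrm xn.
by rewrite cptE hPk Pv_sc pt_sc // expf_neq0.
Qed.


Definition Gi a b c d := Gmx d (-b) (-c) a.
Definition dt a b c d := a * d - b * c.

Lemma gact_comp (M N : M4) (U : M4) : gact N (gact M U) = gact (M *m N) U.
Proof. by apply/genmxP/eqmxP; rewrite mulmxA; apply: eqmxMr (genmxE _). Qed.

Lemma gact_gen (M U : M4) : gact M <<U>>%MS = gact M U.
Proof. by apply/genmxP/eqmxP; apply: eqmxMr (genmxE _). Qed.

Lemma gact_scal k (U : M4) : k != 0 -> gact (k%:M) U = <<U>>%MS.
Proof. by move=> kn; rewrite /gact mul_mx_scalar; apply/genmxP/eqmxP; apply: eqmx_scale. Qed.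

Lemma GiK a b c d : Gi a b c d *m Gmx a b c d = (dt a b c d ^+ 3)%:M.
Proof.
have := GmxK d (-b) (-c) a; rewrite !opprK /Gi => ->; congr (_ ^+ 3)%:M.
by rewrite /dt; ring.
Qed.

Lemma GmxK' a b c d : Gmx a b c d *m Gi a b c d = (dt a b c d ^+ 3)%:M.
Proof. exact: GmxK. Qed.

Lemma Gmx_unit a b c d : dt a b c d != 0 -> Gmx a b c d \in unitmx.
Proof.
move=> dn; have kn : dt a b c d ^+ 3 != 0 by rewrite expf_neq0.
have h : Gmx a b c d *m ((dt a b c d ^+ 3)^-1 *: Gi a b c d) = 1%:M.
  by rewrite -scalemxAr GmxK' scale_scalar_mx mulVf.
exact: (mulmx1_unit h).1.
Qed.

Lemma Gi_unit a b c d : dt a b c d != 0 -> Gi a b c d \in unitmx.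
Proof.
move=> dn; have kn : dt a b c d ^+ 3 != 0 by rewrite expf_neq0.
have h : Gi a b c d *m ((dt a b c d ^+ 3)^-1 *: Gmx a b c d) = 1%:M.
  by rewrite -scalemxAr GiK scale_scalar_mx mulVf.
exact: (mulmx1_unit h).1.
Qed.

Lemma gactK a b c d (U : M4) : dt a b c d != 0 ->
  gact (Gi a b c d) (gact (Gmx a b c d) U) = <<U>>%MS.
Proof. by move=> dn; rewrite gact_comp GmxK' gact_scal // expf_neq0. Qed.

Lemma gactKV a b c d (U : M4) : dt a b c d != 0 ->
  gact (Gmx a b c d) (gact (Gi a b c d) U) = <<U>>%MS.
Proof. by move=> dn; rewrite gact_comp GiK gact_scal // expf_neq0. Qed.

Lemma gact_sub (M U V : M4) : M \in unitmx -> (gact M U <= gact M V)%MS = (U <= V)%MS.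
Proof. by move=> Mu; rewrite /gact !genmxE submxMfree // row_free_unit. Qed.

Lemma gact_rank (M U : M4) : M \in unitmx -> \rank (gact M U) = \rank U.
Proof. by move=> Mu; rewrite /gact genmxE mxrankMfree // row_free_unit. Qed.

Lemma gact_pt (M : M4) (v : 'rV[F]_4) : gact M (pt_of v) = pt_of (v *m M).
Proof. by apply/genmxP/eqmxP; apply: eqmxMr (genmxE _). Qed.

Lemma gact_cpt a b c d t : dt a b c d != 0 ->
  gact (Gmx a b c d) (cpt t) = cpt (mob a b c d t).
Proof. by move=> dn; rewrite cptE gact_pt PvM /mob cpt_nrm // act_nz // hP_nz. Qed.

Lemma gact_join (M U V : M4) : gact M (join U V) = join (gact M U) (gact M V).
Proof.
apply/genmxP/andP; split.
  rewrite (eqmxMr M (genmxE _)) addsmxMr addsmx_sub; apply/andP; split.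
    by apply: submx_trans (addsmxSl _ _); rewrite genmxE.
  by apply: submx_trans (addsmxSr _ _); rewrite genmxE.
rewrite addsmx_sub !genmxE; apply/andP; split; apply: submxMr; rewrite genmxE.
  exact: addsmxSl.
exact: addsmxSr.
Qed.

Lemma gact_inj a b c d (P Q : M4) : dt a b c d != 0 ->
  (gact (Gmx a b c d) P == gact (Gmx a b c d) Q) = (<<P>>%MS == <<Q>>%MS).
Proof.
move=> dn; apply/eqP/eqP => E.
  by rewrite -(gactK P dn) -(gactK Q dn) E.
by rewrite -gact_gen E gact_gen.
Qed.

End W2.

Section W3.
Variable F : finFieldType.
Implicit Types (a b c d k : F) (t s u : option F) (x y w : F * F).
Local Notation M4 := 'M[F]_4.

Definition l0 : M4 := join (cpt (Some 0)) (cpt None).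

Lemma dt_adj a b c d : dt d (-b) (-c) a = dt a b c d.
Proof. by rewrite /dt; ring. Qed.

Lemma cpt_gen t : <<cpt t>>%MS = cpt t.
Proof. by rewrite cptE /pt_of genmx_id. Qed.

Lemma hP_pair t : ((hP t).1, (hP t).2) = hP t.
Proof. by case: (hP t). Qed.

Lemma chord_l0 s t : s != t ->
  dt (hP s).1 (hP s).2 (hP t).1 (hP t).2 != 0 /\
  join (cpt s) (cpt t) = gact (Gmx (hP s).1 (hP s).2 (hP t).1 (hP t).2) l0.
Proof.
move=> st; have dn : dt (hP s).1 (hP s).2 (hP t).1 (hP t).2 != 0 by rewrite /dt eP.
split => //; rewrite /l0 gact_join !gact_cpt // /mob /=.
have -> : act (hP s).1 (hP s).2 (hP t).1 (hP t).2 (1, 0) = hP s.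
  by rewrite /act /=; case: (hP s) => s1 s2 /=; congr pair; ring.
have -> : act (hP s).1 (hP s).2 (hP t).1 (hP t).2 (0, 1) = hP t.
  by rewrite /act /=; case: (hP t) => s1 s2 /=; congr pair; ring.
by rewrite !nrm_hP.
Qed.

Lemma chord_gact a b c d s t : dt a b c d != 0 -> s != t ->
  gact (Gmx a b c d) (join (cpt s) (cpt t)) = join (cpt (mob a b c d s)) (cpt (mob a b c d t))
  /\ mob a b c d s != mob a b c d t.
Proof.
move=> dn st; rewrite gact_join !gact_cpt //; split => //.
by rewrite (inj_eq (mob_inj dn)).
Qed.

Lemma chord_move s t s' t' : s != t -> s' != t' ->
  exists a b c d, dt a b c d != 0 /\
    join (cpt s') (cpt t') = gact (Gmx a b c d) (join (cpt s) (cpt t)).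
Proof.
move=> st st'.
set x := hP s; set y := hP t; set x' := hP s'; set y' := hP t'.
have D : x.1 * y.2 - x.2 * y.1 != 0 by rewrite eP.
have D' : x'.1 * y'.2 - x'.2 * y'.1 != 0 by rewrite eP.
exists (y.2 * x'.1 - x.2 * y'.1), (y.2 * x'.2 - x.2 * y'.2),
       (x.1 * y'.1 - y.1 * x'.1), (x.1 * y'.2 - y.1 * x'.2).
set a := (y.2 * x'.1 - x.2 * y'.1); set b := (y.2 * x'.2 - x.2 * y'.2).
set c := (x.1 * y'.1 - y.1 * x'.1); set d := (x.1 * y'.2 - y.1 * x'.2).
have dn : dt a b c d != 0.
  have -> : dt a b c d = (x.1 * y.2 - x.2 * y.1) * (x'.1 * y'.2 - x'.2 * y'.1).
    by rewrite /dt /a /b /c /d; ring.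
  by rewrite mulf_neq0.
split => //; rewrite (chord_gact dn st).1 /mob.
have -> : act a b c d (hP s) = sc (x.1 * y.2 - x.2 * y.1) x'.
  by rewrite -/x /act /sc /a /b /c /d /=; congr pair; ring.
have -> : act a b c d (hP t) = sc (x.1 * y.2 - x.2 * y.1) y'.
  by rewrite -/y /act /sc /a /b /c /d /=; congr pair; ring.
by rewrite !nrm_sc // !nrm_hP.
Qed.

Lemma orbit_part :
  (exists l : M4, is_chord l) /\
  (forall l : M4, is_chord l -> forall l' : M4, is_chord l' <-> in_G_image l l').
Proof.
split; first by exists l0, (Some 0), None.
move=> l [s [t [st ->]]] l'; split.
  move=> [s' [t' [st' ->]]].
  have [a [b [c [d [dn E]]]]] := chord_move (introN eqP st) (introN eqP st').
  by exists a, b, c, d; split.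
move=> [a [b [c [d [dn ->]]]]].
have [E ne] := chord_gact dn (introN eqP st).
by exists (mob a b c d s), (mob a b c d t); split => //; apply/eqP.
Qed.

End W3.

Section W4.
Variable F : finFieldType.
Implicit Types (a b c d k : F) (t s u : option F) (x y w : F * F).
Local Notation M4 := 'M[F]_4.

Lemma is_psub_gact a b c d n (P : M4) : dt a b c d != 0 -> <<P>>%MS = P ->
  is_psub n (gact (Gmx a b c d) P) = is_psub n P.
Proof.
move=> dn PP; rewrite /is_psub gact_rank ?Gmx_unit // /gact genmx_id eqxx.
by rewrite PP eqxx.
Qed.

Lemma on_curve_gact a b c d (P : M4) : dt a b c d != 0 -> <<P>>%MS = P ->
  on_curve (gact (Gmx a b c d) P) = on_curve P.
Proof.
move=> dn PP; apply/existsP/existsP => [[u /eqP E]|[t /eqP E]].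
  exists (mob d (-b) (-c) a u); apply/eqP.
  move: E; rewrite -{1}(mobKV dn u) -gact_cpt // => /eqP.
  by rewrite gact_inj // PP cpt_gen => /eqP.
by exists (mob a b c d t); rewrite E gact_cpt.
Qed.

Lemma mob_inj' a b c d : dt a b c d != 0 -> injective (mob d (-b) (-c) a).
Proof. by move=> dn; apply: mob_inj; rewrite -/(dt _ _ _ _) dt_adj. Qed.

Lemma n_osc_gact a b c d (P : M4) : dt a b c d != 0 ->
  n_osc (gact (Gmx a b c d) P) = n_osc P.
Proof.
move=> dn; rewrite /n_osc.
have -> : [set t | (gact (Gmx a b c d) P <= osc t)%MS] =
          mob d (-b) (-c) a @^-1: [set t | (P <= osc t)%MS].
  apply/setP => t; rewrite !inE /gact genmxE !subosc -mulmxA GmxU /mob.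
  have dn' : d * a - (- b) * (- c) != 0 by rewrite -/(dt _ _ _ _) dt_adj.
  have yn := act_nz dn' (hP_nz t).
  have [k kn ->] := hP_nrm yn.
  by rewrite Uv_sc -scalemxAr scalemx_eq0 expf_eq0 (negbTE kn) andbF.
exact: card_preimset (mob_inj' dn).
Qed.

Lemma n_cpts_gact a b c d (H : M4) : dt a b c d != 0 ->
  n_cpts (gact (Gmx a b c d) H) = n_cpts H.
Proof.
move=> dn; rewrite /n_cpts.
have -> : [set t | (cpt t <= H)%MS] =
          mob a b c d @^-1: [set t | (cpt t <= gact (Gmx a b c d) H)%MS].
  by apply/setP => t; rewrite !inE -gact_cpt // gact_sub // Gmx_unit.
by rewrite (card_preimset _ (mob_inj dn)).
Qed.


Definition Wt t : 'rV[F]_4 := if t is Some t then D2 (1, t) else D1 (0, 1).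

Lemma tangentE t : tangent t = join (pt_of (Pv (hP t))) (pt_of (Wt t)).
Proof. by case: t => [t|] /=; congr join; congr (pt_of _); rewrite /Pv /D1 /D2 /=; congr rv4; ring. Qed.

Lemma in_tangent u :
  [&& (Pv (hP u) <= tangent u)%MS, (D1 (hP u) <= tangent u)%MS & (D2 (hP u) <= tangent u)%MS].
Proof.
rewrite tangentE !sub_joinr.
have hA : (Pv (hP u) <= pt_of (Pv (hP u)) + pt_of (Wt u))%MS.
  by apply: submx_trans (addsmxSl _ _); rewrite sub_ptr.
have hB : (Wt u <= pt_of (Pv (hP u)) + pt_of (Wt u))%MS.
  by apply: submx_trans (addsmxSr _ _); rewrite sub_ptr.
rewrite hA /=; case: u hA hB => [u|] /= hA hB.
  rewrite hB andbT.
  have -> : D1 (1, u) = 3%:R *: Pv (1, u) + (- u) *: D2 (1, u).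
    by rewrite /D1 /D2 /Pv !rv4Z rv4D /=; congr rv4; ring.
  by apply: addmx_sub; apply: scalemx_sub.
rewrite hB /=.
have -> : D2 (0, 1 : F) = 3%:R *: Pv (0, 1).
  by rewrite /D2 /Pv !rv4Z /=; congr rv4; ring.
exact: scalemx_sub.
Qed.

Lemma nrm_tangent x : nz x ->
  [&& (Pv x <= tangent (nrm x))%MS, (D1 x <= tangent (nrm x))%MS & (D2 x <= tangent (nrm x))%MS].
Proof.
move=> xn; have [k kn hk] := hP_nrm xn.
have := in_tangent (nrm x); rewrite hk Pv_sc D1_sc D2_sc.
case/and3P => h1 h2 h3.
have k3 : k ^+ 3 != 0 by rewrite expf_neq0.
have k2 : k ^+ 2 != 0 by rewrite expf_neq0.
rewrite -(eqmx_scale _ k3) h1 -(eqmx_scale _ k2) h2 -(eqmx_scale _ k2) h3.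
by [].
Qed.

Lemma tangent_gact a b c d t (X : M4) : dt a b c d != 0 ->
  (X <= tangent t)%MS -> (gact (Gmx a b c d) X <= tangent (mob a b c d t))%MS.
Proof.
move=> dn Xt; rewrite /gact genmxE; apply: submx_trans (submxMr _ Xt) _.
have yn := act_nz dn (hP_nz t).
case/and3P: (nrm_tangent yn) => h1 h2 h3.
rewrite tangentE (eqmxMr _ (genmxE _)) addsmxMr addsmx_sub.
rewrite !(eqmxMr _ (genmxE _)) PvM /mob h1 /=.
case: t Xt yn h1 h2 h3 => [t|] /= Xt yn h1 h2 h3.
  by rewrite D2M; apply: addmx_sub; apply: scalemx_sub.
by rewrite D1M; apply: addmx_sub; apply: scalemx_sub.
Qed.

Lemma tang_gact a b c d (P : M4) : dt a b c d != 0 ->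
  [exists t, (gact (Gmx a b c d) P <= tangent t)%MS] = [exists t, (P <= tangent t)%MS].
Proof.
move=> dn; apply/existsP/existsP => [[u Pu]|[t Pt]].
  have dn' : dt d (-b) (-c) a != 0 by rewrite dt_adj.
  have := tangent_gact dn' Pu.
  rewrite -/(Gi a b c d) gactK // genmxE => h.
  by exists (mob d (-b) (-c) a u).
by exists (mob a b c d t); apply: tangent_gact.
Qed.

End W4.

Section W5.
Variable F : finFieldType.
Implicit Types (a b c d k : F) (t s u : option F) (x y w : F * F).
Local Notation M4 := 'M[F]_4.

Lemma Pi_gact a b c d (P : M4) : dt a b c d != 0 -> <<P>>%MS = P ->
  [/\ P1 (gact (Gmx a b c d) P) = P1 P, P2 (gact (Gmx a b c d) P) = P2 P,
      P3 (gact (Gmx a b c d) P) = P3 P, P4 (gact (Gmx a b c d) P) = P4 P &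
      P5 (gact (Gmx a b c d) P) = P5 P].
Proof.
move=> dn PP.
by rewrite /P1 /P2 /P3 /P4 /P5 /is_point is_psub_gact // on_curve_gact // n_osc_gact // tang_gact.
Qed.

Lemma Hi_gact a b c d (H : M4) : dt a b c d != 0 -> <<H>>%MS = H ->
  H2 (gact (Gmx a b c d) H) = H2 H /\ H3 (gact (Gmx a b c d) H) = H3 H.
Proof.
move=> dn PP.
by rewrite /H2 /H3 /is_plane is_psub_gact // n_cpts_gact.
Qed.

Lemma pts_transport a b c d (C : pred M4) (l : M4) : dt a b c d != 0 ->
  (forall P, C P -> <<P>>%MS = P) ->
  (forall P, <<P>>%MS = P -> C (gact (Gmx a b c d) P) = C P) ->
  pts_in C (gact (Gmx a b c d) l) = pts_in C l.
Proof.
move=> dn Ccan Cinv; rewrite /pts_in.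
have Gu := Gmx_unit dn.
have -> : [set P | C P & (P <= gact (Gmx a b c d) l)%MS] =
          gact (Gmx a b c d) @: [set P | C P & (P <= l)%MS].
  apply/setP => P; rewrite inE; apply/andP/imsetP => [[CP Pl]|[Q]].
    exists (gact (Gi a b c d) P).
      have QQ : <<gact (Gi a b c d) P>>%MS = gact (Gi a b c d) P by rewrite /gact genmx_id.
      rewrite inE -Cinv // gactKV // Ccan // CP /=.
      by rewrite -(gact_sub _ _ Gu) gactKV // Ccan.
    by rewrite gactKV // Ccan.
  rewrite inE => /andP[CQ Ql] ->.
  by rewrite Cinv ?Ccan // CQ gact_sub.
rewrite card_in_imset // => P Q; rewrite !inE => /andP[CP _] /andP[CQ _] E.
by rewrite -(Ccan _ CP) -(Ccan _ CQ) -(gactK P dn) -(gactK Q dn) E.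
Qed.

Lemma planes_transport a b c d (C : pred M4) (l : M4) : dt a b c d != 0 ->
  (forall P, C P -> <<P>>%MS = P) ->
  (forall P, <<P>>%MS = P -> C (gact (Gmx a b c d) P) = C P) ->
  planes_in C (gact (Gmx a b c d) l) = planes_in C l.
Proof.
move=> dn Ccan Cinv; rewrite /planes_in.
have Gu := Gmx_unit dn.
have -> : [set P | C P & (gact (Gmx a b c d) l <= P)%MS] =
          gact (Gmx a b c d) @: [set P | C P & (l <= P)%MS].
  apply/setP => P; rewrite inE; apply/andP/imsetP => [[CP Pl]|[Q]].
    exists (gact (Gi a b c d) P).
      have QQ : <<gact (Gi a b c d) P>>%MS = gact (Gi a b c d) P by rewrite /gact genmx_id.
      rewrite inE -Cinv // gactKV // Ccan // CP /=.
      by rewrite -(gact_sub _ _ Gu) gactKV // Ccan.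
    by rewrite gactKV // Ccan.
  rewrite inE => /andP[CQ Ql] ->.
  by rewrite Cinv ?Ccan // CQ gact_sub.
rewrite card_in_imset // => P Q; rewrite !inE => /andP[CP _] /andP[CQ _] E.
by rewrite -(Ccan _ CP) -(Ccan _ CQ) -(gactK P dn) -(gactK Q dn) E.
Qed.

End W5.

Section W6.
Variable F : finFieldType.
Implicit Types (a b c d k : F) (t s u : option F) (x y w : F * F).
Local Notation M4 := 'M[F]_4.
Local Notation L0 := (l0 F).

Lemma mulv_cv4 (v : 'rV[F]_4) (x y z w : F) :
  v *m cv4 x y z w = (v 0 0 * x + v 0 1 * y + v 0 2 * z + v 0 3 * w)%:M.
Proof. by rewrite {1}(rv4E v) rv4_cv4. Qed.

Definition e0 : 'rV[F]_4 := rv4 1 0 0 0.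
Definition e3 : 'rV[F]_4 := rv4 0 0 0 1.

Lemma l0E : L0 = join (pt_of e0) (pt_of e3).
Proof. by rewrite /l0 /=; congr (join (pt_of _) _); rewrite /e0; congr rv4; ring. Qed.

Lemma e0_l0 : (e0 <= L0)%MS.
Proof. by rewrite l0E sub_joinr; apply: submx_trans (addsmxSl _ _); rewrite sub_ptr. Qed.
Lemma e3_l0 : (e3 <= L0)%MS.
Proof. by rewrite l0E sub_joinr; apply: submx_trans (addsmxSr _ _); rewrite sub_ptr. Qed.

Lemma sub_l0 (v : 'rV[F]_4) : (v <= L0)%MS = (v 0 1 == 0) && (v 0 2 == 0).
Proof.
apply/idP/idP.
  move=> vl.
  have k1 : (L0 <= kermx (cv4 0 1 0 0))%MS.
    rewrite l0E sub_joinl !sub_ptl !sub_kermx /e0 /e3 !rv4_cv4 !mx11_eq0.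
    by apply/andP; split; apply/eqP; ring.
  have k2 : (L0 <= kermx (cv4 0 0 1 0))%MS.
    rewrite l0E sub_joinl !sub_ptl !sub_kermx /e0 /e3 !rv4_cv4 !mx11_eq0.
    by apply/andP; split; apply/eqP; ring.
  move: (submx_trans vl k1) (submx_trans vl k2).
  rewrite !sub_kermx !mulv_cv4 !mx11_eq0 /=.
  have -> : v 0 0 * 0 + v 0 1 * 1 + v 0 2 * 0 + v 0 3 * 0 = v 0 1 by ring.
  have -> : v 0 0 * 0 + v 0 1 * 0 + v 0 2 * 1 + v 0 3 * 0 = v 0 2 by ring.
  by move=> -> ->.
case/andP => /eqP h1 /eqP h2.
have -> : v = v 0 0 *: e0 + v 0 3 *: e3.
  by rewrite {1}(rv4E v) h1 h2 /e0 /e3 !rv4Z rv4D; congr rv4; ring.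
by apply: addmx_sub; apply: scalemx_sub; [exact: e0_l0 | exact: e3_l0].
Qed.

Definition fpt (z : option F) : M4 :=
  if z is Some m then pt_of (rv4 1 0 0 m) else pt_of e3.

Lemma is_point_pt (v : 'rV[F]_4) : v != 0 -> is_point (pt_of v).
Proof. by move=> vn; rewrite /is_point /is_psub /pt_of genmxE rank_rV vn genmx_id !eqxx. Qed.

Lemma point_rep (P : M4) : is_point P -> exists2 v : 'rV[F]_4, v != 0 & P = pt_of v.
Proof.
case/andP => /eqP r1 /eqP PP.
have vn : nz_row P != 0.
  rewrite nz_row_eq0; apply/eqP => P0; move: r1; rewrite P0 mxrank0.
  by [].
exists (nz_row P) => //.
have e : (nz_row P == P)%MS.
  by rewrite -(mxrank_leqif_eq (nz_row_sub P)).2 rank_rV vn r1.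
rewrite -{1}PP /pt_of; apply/genmxP/eqmxP; apply: eqmx_sym; exact/eqmxP.
Qed.

Lemma pts_l0 (P : M4) : is_point P -> (P <= L0)%MS -> exists z, P = fpt z.
Proof.
move=> Pp; have [v vn ->] := point_rep Pp; rewrite sub_ptl sub_l0 => /andP[/eqP h1 /eqP h2].
move: vn; rewrite (rv4E v) h1 h2 rv4_eq0 !eqxx /=.
have [v0|v0] := eqVneq (v 0 0) 0.
  rewrite v0 ?eqxx /= => vn.
  exists None; rewrite /= -[in RHS](pt_sc e3 vn) /e3 rv4Z; congr (pt_of _); congr rv4; ring.
move=> _; exists (Some (v 0 3 / v 0 0)); rewrite /= -[in RHS](pt_sc _ v0) rv4Z; congr (pt_of _); congr rv4.
all: rewrite ?mulr1 ?mulr0 //.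
by rewrite mulrC divfK.
Qed.

Lemma fpt_l0 z : is_point (fpt z) && (fpt z <= L0)%MS.
Proof.
case: z => [m|] /=; rewrite sub_ptl sub_l0 !mxE /= eqxx andbT is_point_pt //.
  by rewrite rv4_eq0 oner_eq0.
by rewrite rv4_eq0 oner_eq0 !andbF.
Qed.

Lemma fpt_inj : injective fpt.
Proof.
move=> [m|] [m'|] /= /ptP [a]; rewrite /e3 rv4Z => /eqP; rewrite rv4_eq => /and4P[/eqP h1 _ _ /eqP h4].
- by congr Some; move: h1 h4; rewrite mulr1 => <-; rewrite mul1r.
- by move: h1; rewrite mulr0 => /eqP; rewrite oner_eq0.
- by move: h1 h4; rewrite mulr1 => <-; rewrite mul0r => /eqP; rewrite oner_eq0.
- by [].
Qed.

Lemma pts_in_l0 (C : pred M4) : (forall P, C P -> is_point P) ->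
  pts_in C L0 = #|[set z | C (fpt z)]|.
Proof.
move=> Cp; rewrite /pts_in.
have -> : [set P | C P & (P <= L0)%MS] = fpt @: [set z | C (fpt z)].
  apply/setP => P; rewrite inE; apply/andP/imsetP => [[CP Pl]|[z]].
    have [z Pz] := pts_l0 (Cp _ CP) Pl.
    by exists z => //; rewrite inE -Pz.
  rewrite inE => Cz ->; split => //.
  by case/andP: (fpt_l0 z).
by rewrite card_imset //; apply: fpt_inj.
Qed.

End W6.

Section W7.
Variable F : finFieldType.
Implicit Types (a b c d k m : F) (t s u z : option F) (x y w : F * F).
Local Notation M4 := 'M[F]_4.
Local Notation L0 := (l0 F).

Definition cr m := #|[set t : F | t ^+ 3 == m]|.

Lemma card_opt (Q : pred (option F)) : ~~ Q None ->
  #|[set z | Q z]| = #|[set t : F | Q (Some t)]|.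
Proof.
move=> QN; have -> : [set z | Q z] = Some @: [set t : F | Q (Some t)].
  apply/setP => [[t|]]; rewrite inE.
    by rewrite mem_imset //; [rewrite inE | move=> ? ? []].
  by rewrite (negbTE QN); apply/esym/imsetP => [[? _]].
by rewrite card_imset //; move=> ? ? [].
Qed.

Lemma fpt_osc m t : (fpt (Some m) <= osc t)%MS =
  if t is Some t then t ^+ 3 == m else false.
Proof.
rewrite /fpt sub_ptl subosc Uv_osc; case: t => [t|].
  rewrite rv4_cv4 mx11_eq0.
  have -> : 1 * - t ^+ 3 + 0 * (3%:R * t ^+ 2) + 0 * - (3%:R * t) + m * 1 = m - t ^+ 3 by ring.
  by rewrite subr_eq0 eq_sym.
rewrite mulmxN oppr_eq0 rv4_cv4 mx11_eq0.
have -> : 1 * 1 + 0 * 0 + 0 * 0 + m * (0 : F) = 1 by ring.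
by rewrite oner_eq0.
Qed.

Lemma n_osc_fpt m : n_osc (fpt (Some m)) = cr m.
Proof.
rewrite /n_osc (card_opt (Q := fun t => (fpt (Some m) <= osc t)%MS)).
  by apply: eq_card => t; rewrite !inE fpt_osc.
by rewrite fpt_osc.
Qed.

Lemma n_osc_cpt (u : option F) : (n_osc (cpt u) == 0%N) = false.
Proof.
apply/negbTE; rewrite /n_osc cards_eq0; apply/set0Pn; exists u.
by rewrite inE cptE sub_ptl subosc Pv_Uv mx11_eq0 expf_eq0 /= eP.
Qed.

Lemma fpt_cpt0 : fpt (Some (0 : F)) = cpt (Some 0).
Proof. by rewrite /=; congr (pt_of _); congr rv4; ring. Qed.
Lemma fpt_cptN : fpt (None : option F) = cpt None.
Proof. by []. Qed.

Lemma on_curve_fpt z : on_curve (fpt z) = (z == None) || (z == Some 0).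
Proof.
case: z => [m|]; last by apply/existsP; exists None.
have [->|mn] := eqVneq m 0; first by rewrite eqxx orbT; apply/existsP; exists (Some 0); rewrite fpt_cpt0.
have -> : (Some m == None) || (Some m == Some 0) = false.
  apply/negbTE; rewrite negb_or; apply/andP; split => //.
apply/negbTE/negP => /existsP [t /eqP E].
move: E; rewrite cptE => /ptP [a]; rewrite /Pv rv4Z => /eqP; rewrite rv4_eq.
case/and4P => /eqP h1 /eqP h2 /eqP h3 /eqP h4.
case: t h1 h2 h3 h4 => [t|] /= h1 h2 h3 h4.
  move: h1; rewrite expr1n mulr1 => a1; move: h2; rewrite -a1 expr1n !mul1r => t0.
  by move: h4 mn; rewrite -a1 -t0 mul1r expr0n /= => ->; rewrite eqxx.
by move: h1; rewrite expr0n mulr0 => /eqP; rewrite oner_eq0.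
Qed.

Lemma no_tangent_col (v : 'rV[F]_4) (A B : 'rV[F]_4) (col : 'cV[F]_4) :
  (v <= join (pt_of A) (pt_of B))%MS -> A *m col == 0 -> B *m col == 0 -> v *m col == 0.
Proof.
move=> vs hA hB; rewrite -sub_kermx; apply: submx_trans vs _.
by rewrite sub_joinl !sub_ptl !sub_kermx hA hB.
Qed.

Lemma fpt_tangent m : m != 0 -> [exists t, (fpt (Some m) <= tangent t)%MS] = false.
Proof.
move=> mn; apply/negbTE/existsP => [[t]]; rewrite /fpt sub_ptl.
case: t => [t|] /= Ht.
  have [t0|tn] := eqVneq t 0.
    have := no_tangent_col (col := cv4 0 0 0 1) Ht.
    rewrite !rv4_cv4 !mx11_eq0 t0.
    have -> : 1 * 0 + 0 * 0 + 0 ^+ 2 * 0 + 0 ^+ 3 * 1 = 0 :> F by ring.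
    have -> : 0 * 0 + 1 * 0 + 2%:R * 0 * 0 + 3%:R * 0 ^+ 2 * 1 = 0 :> F by ring.
    have -> : 1 * 0 + 0 * 0 + 0 * 0 + m * 1 = m by ring.
    by rewrite eqxx (negbTE mn) => /(_ isT isT).
  have := no_tangent_col (col := cv4 (t ^+ 2) (- (2%:R * t)) 1 0) Ht.
  rewrite !rv4_cv4 !mx11_eq0.
  have -> : 1 * t ^+ 2 + t * - (2%:R * t) + t ^+ 2 * 1 + t ^+ 3 * 0 = 0 by ring.
  have -> : 0 * t ^+ 2 + 1 * - (2%:R * t) + 2%:R * t * 1 + 3%:R * t ^+ 2 * 0 = 0 by ring.
  have -> : 1 * t ^+ 2 + 0 * - (2%:R * t) + 0 * 1 + m * 0 = t ^+ 2 by ring.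
  by rewrite eqxx expf_eq0 /= (negbTE tn) => /(_ isT isT).
have := no_tangent_col (col := cv4 1 0 0 0) Ht.
rewrite !rv4_cv4 !mx11_eq0.
have -> : 0 * 1 + 0 * 0 + 0 * 0 + 1 * 0 = 0 :> F by ring.
have -> : 0 * 1 + 0 * 0 + 1 * 0 + 0 * 0 = 0 :> F by ring.
have -> : 1 * 1 + 0 * 0 + 0 * 0 + m * 0 = 1 by ring.
by rewrite eqxx oner_eq0 => /(_ isT isT).
Qed.

Lemma fpt_point z : is_point (fpt z).
Proof. by case/andP: (fpt_l0 z). Qed.

Lemma P1_fpt z : P1 (fpt z) = (z == None) || (z == Some 0).
Proof. by rewrite /P1 fpt_point on_curve_fpt. Qed.

Lemma P2_fpt z : P2 (fpt z) = false.
Proof.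
rewrite /P2 fpt_point on_curve_fpt; case: z => [m|] //.
have [->|mn] := eqVneq m 0; first by rewrite eqxx orbT.
by rewrite fpt_tangent // andbF.
Qed.

Lemma Pn_fpt z (n : nat) : (n != 0)%N ->
  [&& is_point (fpt z), ~~ on_curve (fpt z) & n_osc (fpt z) == n] =
  if z is Some m then (m != 0) && (cr m == n) else false.
Proof.
move=> nn; rewrite fpt_point on_curve_fpt; case: z => [m|] //.
have [->|mn] := eqVneq m 0; first by rewrite eqxx orbT.
by rewrite n_osc_fpt /= (inj_eq (@Some_inj _)) mn.
Qed.

Lemma P5_fpt z : P5 (fpt z) = if z is Some m then (m != 0) && (cr m == 0%N) else false.
Proof.
rewrite /P5 fpt_point /=; case: z => [m|]; last by rewrite fpt_cptN n_osc_cpt.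
have [->|mn] := eqVneq m 0; first by rewrite fpt_cpt0 n_osc_cpt.
by rewrite n_osc_fpt.
Qed.

Lemma count_P1 : pts_in (@P1 F) L0 = 2%N.
Proof.
rewrite pts_in_l0; last by move=> P /andP[].
rewrite (eq_card (B := [set None; Some 0])); first by rewrite cards2.
by move=> z; rewrite !inE P1_fpt.
Qed.

Lemma count_P2 : pts_in (@P2 F) L0 = 0%N.
Proof.
rewrite pts_in_l0; last by move=> P /andP[].
by apply: eq_card0 => z; rewrite !inE P2_fpt.
Qed.

Lemma count_Pn (n : nat) (C : pred M4) : (n != 0)%N ->
  (forall P, C P = [&& is_point P, ~~ on_curve P & n_osc P == n]) ->
  pts_in C L0 = #|[set m : F | (m != 0) && (cr m == n)]|.
Proof.
move=> nn CE; rewrite pts_in_l0; last by move=> P; rewrite CE => /andP[].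
rewrite (card_opt (Q := fun z => C (fpt z))); last by rewrite CE Pn_fpt.
by apply: eq_card => m; rewrite !inE CE Pn_fpt.
Qed.

Lemma count_P5 : pts_in (@P5 F) L0 = #|[set m : F | (m != 0) && (cr m == 0%N)]|.
Proof.
rewrite pts_in_l0; last by move=> P /andP[].
rewrite (card_opt (Q := fun z => P5 (fpt z))); last by rewrite P5_fpt.
by apply: eq_card => m; rewrite !inE P5_fpt.
Qed.

End W7.

Section W8.
Variable F : finFieldType.
Implicit Types (a b c d k m : F) (t s u z : option F) (x y w : F * F).
Local Notation M4 := 'M[F]_4.
Local Notation L0 := (l0 F).

Ltac ord4 j := case: j => [[|[|[|[|//]]]] ?].

Lemma cv4E (n : 'cV[F]_4) : n = cv4 (n 0 0) (n 1 0) (n 2 0) (n 3 0).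
Proof. by apply/colP => j; rewrite mxE; ord4 j => /=; congr (n _ _); exact: val_inj. Qed.

Lemma cv4_eq0 a b c d : (cv4 a b c d == 0) = [&& a == 0, b == 0, c == 0 & d == 0].
Proof.
apply/eqP/idP => [E|/and4P[/eqP-> /eqP-> /eqP-> /eqP->]].
  have e := fun j => congr1 (fun M : 'cV[F]_4 => M j 0) E.
  by move: (e 0) (e 1) (e 2) (e 3); rewrite !mxE /= => -> -> -> ->; rewrite !eqxx.
by apply/colP => j; rewrite !mxE; ord4 j.
Qed.

Lemma rank_cv (n : 'cV[F]_4) : n != 0 -> \rank n = 1%N.
Proof.
move=> nn; rewrite -mxrank_tr rank_rV.
suff -> : n^T != 0 by [].
by apply/negP => /eqP h; move: nn; rewrite -(trmxK n) h trmx0 eqxx.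
Qed.

Lemma is_plane_of (n : 'cV[F]_4) : n != 0 -> is_plane (plane_of n).
Proof.
by move=> nn; rewrite /is_plane /is_psub /plane_of genmxE mxrank_ker rank_cv // genmx_id !eqxx.
Qed.

Definition nv z : 'cV[F]_4 := if z is Some m then cv4 0 1 m 0 else cv4 0 0 1 0.
Definition gpl z : M4 := plane_of (nv z).

Lemma nv_nz z : nv z != 0.
Proof. by case: z => [m|]; rewrite /nv cv4_eq0 oner_eq0 ?andbF. Qed.

Lemma gpl_l0 z : is_plane (gpl z) && (L0 <= gpl z)%MS.
Proof.
rewrite is_plane_of ?nv_nz //= l0E sub_joinl !sub_ptl !sub_plane /e0 /e3.
by case: z => [m|]; rewrite /nv !rv4_cv4 !mx11_eq0; apply/andP; split; apply/eqP; ring.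
Qed.

Lemma sub_gpl (v : 'rV[F]_4) z : (v <= gpl z)%MS = (v *m nv z == 0).
Proof. exact: sub_plane. Qed.

Lemma gpl_inj : injective gpl.
Proof.
move=> z1 z2 E.
have E' : forall v : 'rV[F]_4, (v *m nv z1 == 0) = (v *m nv z2 == 0).
  by move=> v; rewrite -!sub_gpl E.
case: z1 z2 E E' => [m|] [m'|] _ E' //.
- have := E' (rv4 0 m (-1) 0); rewrite /nv !rv4_cv4 !mx11_eq0.
  have -> : 0 * 0 + m * 1 + -1 * m + 0 * 0 = 0 by ring.
  have -> : 0 * 0 + m * 1 + -1 * m' + 0 * 0 = m - m' by ring.
  by rewrite eqxx subr_eq0 => /esym /eqP ->.
- have := E' (rv4 0 1 0 0); rewrite /nv !rv4_cv4 !mx11_eq0.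
  have -> : 0 * 0 + 1 * 1 + 0 * m + 0 * 0 = 1 :> F by ring.
  have -> : 0 * 0 + 1 * 0 + 0 * 1 + 0 * 0 = 0 :> F by ring.
  by rewrite eqxx oner_eq0.
- have := E' (rv4 0 1 0 0); rewrite /nv !rv4_cv4 !mx11_eq0.
  have -> : 0 * 0 + 1 * 1 + 0 * m' + 0 * 0 = 1 :> F by ring.
  have -> : 0 * 0 + 1 * 0 + 0 * 1 + 0 * 0 = 0 :> F by ring.
  by rewrite eqxx oner_eq0.
Qed.

Lemma planes_l0 (H : M4) : is_plane H -> (L0 <= H)%MS -> exists z, H = gpl z.
Proof.
case/andP => /eqP r3 /eqP HH Hl.
have kr : \rank (kermx H^T) = 1%N by rewrite mxrank_ker mxrank_tr r3.
set w := nz_row (kermx H^T).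
have wn : w != 0.
  by apply/negP; rewrite nz_row_eq0 => /eqP K; move: kr; rewrite K mxrank0.
have wH : w *m H^T = 0 by apply/eqP; rewrite -sub_kermx nz_row_sub.
set n := w^T.
have Hn : H *m n = 0 by rewrite /n -[H]trmxK -trmx_mul wH trmx0.
have nn : n != 0 by apply/negP => /eqP h; move: wn; rewrite -(trmxK w) -/n h trmx0 eqxx.
have Hk : (H <= kermx n)%MS by rewrite sub_kermx Hn.
have eH : (H == kermx n)%MS.
  by rewrite -(mxrank_leqif_eq Hk).2 mxrank_ker rank_cv // r3.
have Hpl : H = plane_of n by rewrite -HH /plane_of; apply/genmxP.
have n0 : n 0 0 = 0.
  have := submx_trans (submx_trans (e0_l0 F) Hl) Hk.
  by rewrite sub_kermx {1}(cv4E n) /e0 rv4_cv4 mx11_eq0 => /eqP <-; ring.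
have n3 : n 3 0 = 0.
  have := submx_trans (submx_trans (e3_l0 F) Hl) Hk.
  by rewrite sub_kermx {1}(cv4E n) /e3 rv4_cv4 mx11_eq0 => /eqP <-; ring.
move: nn; rewrite Hpl (cv4E n) n0 n3 cv4_eq0 eqxx /=.
have [n1|n1] := eqVneq (n 1 0) 0.
  rewrite n1 ?eqxx /= ?andbT => n2.
  exists None; rewrite /gpl /nv -[in RHS](plane_sc _ n2) cv4Z; congr (plane_of _); congr cv4; ring.
move=> _; exists (Some (n 2 0 / n 1 0)).
rewrite /gpl /nv -[in RHS](plane_sc _ n1) cv4Z; congr (plane_of _); congr cv4.
all: rewrite ?mulr1 ?mulr0 //.
by rewrite mulrC divfK.
Qed.

Lemma planes_in_l0 (C : pred M4) : (forall H, C H -> is_plane H) ->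
  planes_in C L0 = #|[set z | C (gpl z)]|.
Proof.
move=> Cp; rewrite /planes_in.
have -> : [set H | C H & (L0 <= H)%MS] = gpl @: [set z | C (gpl z)].
  apply/setP => H; rewrite inE; apply/andP/imsetP => [[CH Hl]|[z]].
    have [z Hz] := planes_l0 (Cp _ CH) Hl.
    by exists z => //; rewrite inE -Hz.
  rewrite inE => Cz ->; split => //.
  by case/andP: (gpl_l0 z).
by rewrite card_imset //; apply: gpl_inj.
Qed.

Lemma n_cpts_gpl z :
  n_cpts (gpl z) = if z is Some m then (if m == 0 then 2%N else 3%N) else 2%N.
Proof.
rewrite /n_cpts.
have hv : forall t, (cpt t <= gpl z)%MS = (Pv (hP t) *m nv z == 0).
  by move=> t; rewrite cptE sub_ptl sub_gpl.
case: z hv => [m|] hv.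
  have [m0|mn] := eqVneq m 0.
    subst m; rewrite ?eqxx (eq_card (B := [set None; Some 0])) ?cards2 // => t.
    rewrite !inE hv /nv; case: t => [t|]; rewrite /Pv rv4_cv4 mx11_eq0 /=.
      have -> : 1 ^+ 3 * 0 + 1 ^+ 2 * t * 1 + 1 * t ^+ 2 * 0 + t ^+ 3 * 0 = t by ring.
      by rewrite (inj_eq (@Some_inj _)).
    by apply/eqP; ring.
  rewrite ?(negbTE mn) (eq_card (B := [set x in [:: None; Some 0; Some (- m^-1)]])).
    rewrite cardsE; apply/card_uniqP; rewrite /= !inE !(inj_eq (@Some_inj _)) /= eq_sym oppr_eq0 invr_eq0 mn.
    by [].
  move=> t; rewrite !inE hv /nv; case: t => [t|]; rewrite /Pv rv4_cv4 mx11_eq0 /=.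
    have -> : 1 ^+ 3 * 0 + 1 ^+ 2 * t * 1 + 1 * t ^+ 2 * m + t ^+ 3 * 0 = t * (1 + m * t) by ring.
    rewrite mulf_eq0 !(inj_eq (@Some_inj _)); congr (_ || _).
    apply/eqP/eqP => [h|->]; last by field.
    have : m * t = -1 by apply/eqP; rewrite -subr_eq0 opprK addrC h.
    by move=> e; apply: (mulfI mn); rewrite e mulrN mulfV.
  by apply/eqP; ring.
rewrite (eq_card (B := [set None; Some 0])) ?cards2 // => t.
rewrite !inE hv /nv; case: t => [t|]; rewrite /Pv rv4_cv4 mx11_eq0 /=.
  have -> : 1 ^+ 3 * 0 + 1 ^+ 2 * t * 0 + 1 * t ^+ 2 * 1 + t ^+ 3 * 0 = t ^+ 2 by ring.
  by rewrite expf_eq0 /= (inj_eq (@Some_inj _)).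
by apply/eqP; ring.
Qed.

Lemma count_H2 : planes_in (@H2 F) L0 = 2%N.
Proof.
rewrite planes_in_l0; last by move=> H /andP[].
rewrite (eq_card (B := [set None; Some 0])) ?cards2 // => z.
rewrite !inE /H2 n_cpts_gpl; case/andP: (gpl_l0 z) => -> _ /=.
case: z => [m|] //=; rewrite (inj_eq (@Some_inj _)).
by case: (m == 0).
Qed.

Lemma count_H3 : planes_in (@H3 F) L0 = #|F|.-1.
Proof.
rewrite planes_in_l0; last by move=> H /andP[].
rewrite (card_opt (Q := fun z => H3 (gpl z))); last first.
  by rewrite /H3 n_cpts_gpl andbF.
rewrite -(cardsC1 (0 : F)); apply: eq_card => m; rewrite !inE /H3 n_cpts_gpl.
case/andP: (gpl_l0 (Some m)) => -> _ /=.
by case: (m == 0).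
Qed.

End W8.

Section W9.
Variable F : finFieldType.
Local Notation q := #|F|.

Lemma cube_inv : (q %% 6 = 5)%N -> exists k : nat, forall t : F, (t ^+ 3) ^+ k = t.
Proof.
move=> h; exists (4 * (q %/ 6) + 3)%N => t.
have e : (3 * (4 * (q %/ 6) + 3) = 2 * q - 1)%N.
  have := divn_eq q 6; rewrite h; lia.
rewrite -exprM e.
have [->|tn] := eqVneq t 0.
  rewrite expr0n; case: eqP => //; have : (0 < q)%N by apply/card_gt0P; exists 0.
  lia.
apply: (mulIf tn); rewrite -exprSr.
have -> : (2 * q - 1).+1 = (q * 2)%N.
  have : (0 < q)%N by apply/card_gt0P; exists 0.
  lia.
by rewrite exprM expf_card.
Qed.

Lemma cr5 : (q %% 6 = 5)%N -> forall m : F, cr m = 1%N.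
Proof.
move=> h m; have [k hk] := cube_inv h.
have inj : injective (fun t : F => t ^+ 3).
  by move=> x y /= E; rewrite -(hk x) -(hk y) E.
rewrite /cr -[RHS](cards1 m) -(card_preimset [set m] inj).
by apply: eq_card => t; rewrite !inE.
Qed.

Lemma omega : (q %% 6 = 1)%N -> exists w : F, w ^+ 3 = 1 /\ w != 1.
Proof.
move=> h.
have d3 : (3 %| #|[set: {unit F}]|)%N.
  rewrite card_finField_unit; apply/dvdnP; exists (2 * (q %/ 6))%N.
  have := divn_eq q 6; rewrite h; lia.
have [x _ ox] := Cauchy (isT : prime 3) d3.
exists (val x); split.
  by rewrite -FinRing.val_unitX -ox expg_order.
apply/negP => /eqP x1.
have : x = 1%g by apply: val_inj; rewrite x1.
by move=> x1'; move: ox; rewrite x1' order1.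
Qed.


Lemma cr1 : (q %% 6 = 1)%N -> forall m : F, m != 0 -> (cr m == 0%N) || (cr m == 3%N).
Proof.
move=> h m mn; have [w [w3 w1]] := omega h.
have s0 : 1 + w + w ^+ 2 = 0.
  have e : (w - 1) * (1 + w + w ^+ 2) = w ^+ 3 - 1 by ring.
  by move: e; rewrite w3 subrr => /eqP; rewrite mulf_eq0 subr_eq0 (negbTE w1) /= => /eqP.
have w0 : w != 0 by apply/negP => /eqP w0; move: w3; rewrite w0 expr0n => /eqP; rewrite eq_sym oner_eq0.
have w21 : w ^+ 2 != 1.
  apply/negP => /eqP w2; move: w3; rewrite exprS w2 mulr1 => w1'.
  by move: w1; rewrite w1' eqxx.
case: (pickP (fun t : F => t ^+ 3 == m)) => [t0 /eqP h0|no]; last first.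
  by rewrite /cr (eq_card0 (A := [set t | t ^+ 3 == m])) // => t; rewrite inE no.
have t0n : t0 != 0 by apply/negP => /eqP t0z; move: mn; rewrite -h0 t0z expr0n eqxx.
apply/orP; right; apply/eqP.
rewrite /cr (eq_card (B := [set x in [:: t0; w * t0; w ^+ 2 * t0]])).
  rewrite cardsE; apply/card_uniqP; rewrite /= !inE andbT.
  have e1 : (t0 == w * t0) = (1 == w) by rewrite -[RHS](inj_eq (mulIf t0n)) mul1r.
  have e2 : (t0 == w ^+ 2 * t0) = (1 == w ^+ 2) by rewrite -[RHS](inj_eq (mulIf t0n)) mul1r.
  have e3 : (w * t0 == w ^+ 2 * t0) = (1 == w).
    by rewrite (inj_eq (mulIf t0n)) exprS expr1 -{1}[w]mulr1 (inj_eq (mulfI w0)).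
  by rewrite e1 e2 e3 !(eq_sym 1) negb_or w1 w21.
move=> t; rewrite !inE -h0.
have key : (t - t0) * (t - w * t0) * (t - w ^+ 2 * t0) =
  t ^+ 3 - t0 ^+ 3 - (1 + w + w ^+ 2) * t0 * t ^+ 2 + w * (1 + w + w ^+ 2) * t0 ^+ 2 * t
  - (w ^+ 3 - 1) * t0 ^+ 3 by ring.
rewrite s0 w3 subrr in key.
apply/idP/idP.
  move=> /eqP e; move: key; rewrite e subrr.
  have -> : 0 - 0 * t0 * t ^+ 2 + w * 0 * t0 ^+ 2 * t - 0 * t0 ^+ 3 = 0 :> F by ring.
  by move/eqP; rewrite !mulf_eq0 !subr_eq0 -orbA.
case/or3P => /eqP ->; rewrite ?exprMn ?w3 ?mul1r //.
Qed.


Lemma count_cubes : (q %% 6 = 1)%N ->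
  muln #|[set m : F | (m != 0) && (cr m == 3%N)]| 3 = q.-1.
Proof.
move=> h.
rewrite -(cardsC1 (0 : F)) -[RHS]sum1_card.
rewrite (partition_big (fun t : F => t ^+ 3) (fun m => m != 0)) /=; last first.
  by move=> t; rewrite !inE => tn; rewrite expf_neq0.
rewrite -sum_nat_const.
rewrite [RHS](bigID (fun m => cr m == 3%N)) /=.
have inner : forall m : F, m != 0 ->
    (\sum_(t in [set~ (0%R : F)] | t ^+ 3 == m) 1)%N = cr m.
  move=> m mn; rewrite /cr -sum1_card; apply: eq_bigl => t; rewrite !inE.
  case: (eqVneq (t ^+ 3) m) => [e|]; rewrite ?andbF ?andbT //.
  by apply/negP => /eqP t0; move: mn; rewrite -e t0 expr0n eqxx.
set S2 := (X in (_ + X)%N).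
have -> : S2 = 0%N.
  rewrite /S2; apply: big1 => m /andP[mn c3]; rewrite inner //.
  by move: (cr1 h mn); rewrite (negbTE c3) orbF => /eqP.
rewrite addn0.
apply: eq_big => [m|m]; first by rewrite inE.
by rewrite inE => /andP[mn /eqP c3]; rewrite inner // c3.
Qed.

End W9.

Section W10.
Variable F : finFieldType.
Implicit Types (a b c d k m : F) (t s u z : option F).
Local Notation M4 := 'M[F]_4.
Local Notation L0 := (l0 F).

Lemma cpt_osc s u : (cpt s <= osc u)%MS = (u == s).
Proof. by rewrite cptE sub_ptl subosc Pv_Uv mx11_eq0 expf_eq0 /= eP. Qed.

Lemma chord_H1 s t : s != t -> planes_in (@H1 F) (join (cpt s) (cpt t)) = 0%N.
Proof.
move=> st; apply: eq_card0 => H; rewrite !inE; apply/negP.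
case/andP => /andP[_ /existsP[u /eqP ->]]; rewrite sub_joinl !cpt_osc.
by case/andP => /eqP us /eqP ut; move: st; rewrite -us -ut eqxx.
Qed.

Lemma chord_ncpts s t (H : M4) : s != t -> (join (cpt s) (cpt t) <= H)%MS -> (2 <= n_cpts H)%N.
Proof.
move=> st; rewrite sub_joinl => /andP[hs ht].
have -> : 2%N = #|[set s; t]| by rewrite cards2 st.
rewrite /n_cpts; apply: subset_leq_card; apply/subsetP => x; rewrite !inE.
by case/orP => /eqP ->.
Qed.

Lemma chord_H4 s t : s != t -> planes_in (@H4 F) (join (cpt s) (cpt t)) = 0%N.
Proof.
move=> st; apply: eq_card0 => H; rewrite !inE; apply/negP.
case/andP => /and3P[_ _ /eqP n1] lH; have := chord_ncpts st lH.
by rewrite n1.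
Qed.

Lemma chord_H5 s t : s != t -> planes_in (@H5 F) (join (cpt s) (cpt t)) = 0%N.
Proof.
move=> st; apply: eq_card0 => H; rewrite !inE; apply/negP.
case/andP => /andP[_ /eqP n1] lH; have := chord_ncpts st lH.
by rewrite n1.
Qed.

Lemma pt_can (P : M4) : is_point P -> <<P>>%MS = P.
Proof. by case/andP => _ /eqP. Qed.
Lemma pl_can (P : M4) : is_plane P -> <<P>>%MS = P.
Proof. by case/andP => _ /eqP. Qed.

Lemma chord_OD s t : s != t ->
  let l := join (cpt s) (cpt t) in
  OD2 l = [:: 0; 2; #|F|.-1; 0; 0]%N /\
  [/\ pts_in (@P1 F) l = 2%N, pts_in (@P2 F) l = 0%N,
      pts_in (@P3 F) l = pts_in (@P3 F) L0,
      pts_in (@P4 F) l = pts_in (@P4 F) L0 &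
      pts_in (@P5 F) l = pts_in (@P5 F) L0].
Proof.
move=> st l.
have [dn E] := chord_l0 st.
have tr := fun (C : pred M4) (Cc : forall P : M4, C P -> <<P>>%MS = P) Ci =>
  @pts_transport F _ _ _ _ C L0 dn Cc Ci.
have trp := fun (C : pred M4) (Cc : forall P : M4, C P -> <<P>>%MS = P) Ci =>
  @planes_transport F _ _ _ _ C L0 dn Cc Ci.
split; [|split].
- rewrite /OD2 /l chord_H1 // chord_H4 // chord_H5 //.
  rewrite E trp; last by move=> P PP; case: (Hi_gact dn PP).
    rewrite count_H2 trp; last by move=> P PP; case: (Hi_gact dn PP).
      by rewrite count_H3.
    by move=> P /andP[/pl_can].
  by move=> P /andP[/pl_can].
- rewrite /l E tr ?count_P1 //; first by move=> P /andP[/pt_can].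
  by move=> P PP; case: (Pi_gact dn PP).
- rewrite /l E tr ?count_P2 //; first by move=> P /andP[/pt_can].
  by move=> P PP; case: (Pi_gact dn PP).
- rewrite /l E tr //; first by move=> P /andP[/pt_can].
  by move=> P PP; case: (Pi_gact dn PP).
- rewrite /l E tr //; first by move=> P /andP[/pt_can].
  by move=> P PP; case: (Pi_gact dn PP).
- rewrite /l E tr //; first by move=> P /andP[/pt_can].
  by move=> P PP; case: (Pi_gact dn PP).
Qed.

End W10.

Lemma final_counts (F : finFieldType) :
  ((#|F| %% 6 = 5)%N ->
     [/\ pts_in (@P3 F) (l0 F) = 0%N, pts_in (@P4 F) (l0 F) = #|F|.-1 &
         pts_in (@P5 F) (l0 F) = 0%N]) /\
  ((#|F| %% 6 = 1)%N ->
     [/\ pts_in (@P3 F) (l0 F) = ((#|F| - 1) %/ 3)%N, pts_in (@P4 F) (l0 F) = 0%N &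
         pts_in (@P5 F) (l0 F) = ((2 * (#|F| - 1)) %/ 3)%N]).
Proof.
have C3 := @count_Pn F 3 (@P3 F) isT (fun P => erefl).
have C4 := @count_Pn F 1 (@P4 F) isT (fun P => erefl).
split => h.
  have c1 := cr5 h.
  rewrite C3 C4 count_P5; split.
  - by apply: eq_card0 => m; rewrite !inE c1 andbF.
  - by rewrite -(cardsC1 (0 : F)); apply: eq_card => m; rewrite !inE c1 eqxx andbT.
  - by apply: eq_card0 => m; rewrite !inE c1 andbF.
have c1 := cr1 h.
have N := count_cubes h.
set N3 := #|_| in N.
have A0 : #|[set m : F | (m != 0) && (cr m == 0%N)]| = (#|F|.-1 - N3)%N.
  rewrite -(cardsC1 (0 : F)) -(cardsID [set m : F | cr m == 3%N] [set~ 0]) /N3.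
  have -> : [set~ (0 : F)] :&: [set m | cr m == 3%N] = [set m : F | (m != 0) && (cr m == 3%N)].
    by apply/setP => m; rewrite !inE.
  rewrite addKn; apply: eq_card => m; rewrite !inE.
  have [->|mn] := eqVneq m 0; first by rewrite ?eqxx ?andbF.
  by move: (c1 m mn) => /orP[] /eqP ->.
rewrite C3 C4 count_P5 A0; split.
- by rewrite -/N3 subn1 -N mulnK.
- apply: eq_card0 => m; rewrite !inE.
  have [->|mn] := eqVneq m 0; first by rewrite ?eqxx.
  by move: (c1 m mn) => /orP[] /eqP ->.
- rewrite subn1 -N.
  have -> : (2 * (N3 * 3) = (2 * N3) * 3)%N by rewrite mulnA.
  rewrite mulnK //; lia.
Qed.

Theorem mainTheorem10 (F : finFieldType) (q : nat) (hq : #|F| = q)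
  (h2 : (2 \notin [pchar F])%N) (h3 : (3 \notin [pchar F])%N) :
  (* L6 is a single G-orbit *)
  ((exists l : 'M[F]_4, is_chord l) /\
   (forall l : 'M[F]_4, is_chord l ->
      forall l' : 'M[F]_4, is_chord l' <-> in_G_image l l')) /\
  (forall l : 'M[F]_4, is_chord l ->
     OD2 l = [:: 0; 2; q - 1; 0; 0]%N /\
     ((q %% 6 = 5)%N -> OD0 l = [:: 2; 0; 0; q - 1; 0]%N) /\
     ((q %% 6 = 1)%N -> OD0 l = [:: 2; 0; (q - 1) %/ 3; 0; (2 * (q - 1)) %/ 3]%N)).
Proof.
split; first exact: orbit_part.
move=> l [s [t [st ->]]].
have [O2 [e1 e2 e3 e4 e5]] := chord_OD (introN eqP st).
have [f5 f1] := final_counts F.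
rewrite -hq; split; first by rewrite O2 subn1.
split => h; rewrite /OD0 e1 e2 e3 e4 e5.
  by case: (f5 h) => -> -> ->; rewrite subn1.
by case: (f1 h) => -> -> ->.
Qed.
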